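(* Let $Y$ be a finite totally ordered set, $P=(T_1,T_2)$ a confluent pair of reduction operators relatively to $Y$, and $k$ an integer with $\langle T_1,T_2\rangle^k=\langle T_2,T_1\rangle^k$. Let $W$ be a subspace of $\mathbb{K}Y$ and $\{i,j\}=\{1,2\}$. If $W\subset\ker(T_i)$, then $\varphi^P(\gamma_j)|_W=(T_1\vee T_2)|_W$.
   Context: For $0\neq v\in\mathbb{K}Y$, $\mathrm{lm}(v)$ is the greatest element of $Y$ in the support of $v$; write $v<w$ if $v=0$ or $\mathrm{lm}(v)<\mathrm{lm}(w)$. A reduction operator relatively to $Y$ is a linear projector $T$ of $\mathbb{K}Y$ with $T(y)=y$ or $T(y)<y$ for each $y\in Y$. For every subspace $U$ of $\mathbb{K}Y$ there is a unique reduction operator with kernel $U$, denoted $\theta_Y^{-1}(U)$; $T_1\vee T_2=\theta_Y^{-1}(\ker T_1\cap\ker T_2)$. For endomorphisms $s,t$, $\langle t,s\rangle^k$ denotes $\cdots sts$ with $k$ factors (rightmost $s$); $(T_1,T_2)$ is confluent if $\langle T_1,T_2\rangle^k=\langle T_2,T_1\rangle^k$ for some $k$. The confluence algebra $\mathcal{A}_k$ is generated by $s_1,s_2$ with relations $s_1^2=s_1$, $s_2^2=s_2$, $\langle s_1,s_2\rangle^k=\langle s_2,s_1\rangle^k$; in it $\gamma_1=(1-s_2)\sum_{i\in I}\langle s_2,s_1\rangle^i$ and $\gamma_2=(1-s_1)\sum_{i\in I}\langle s_1,s_2\rangle^i$, where $I$ is the set of odd integers between $1$ and $k-1$. $\varphi^P:\mathcal{A}_k\to\mathrm{End}(\mathbb{K}Y)$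 is the algebra morphism $s_1\mapsto T_1$, $s_2\mapsto T_2$. *)

(* Defs.v *)
(* K Y is modelled as row vectors 'rV[K]_n, with Y = 'I_n
   (natural order) and basis vector y = delta_mx 0 y.  Endomorphisms are
   matrices acting on the RIGHT: T(v) := v *m T.  Hence the composite
   "s after t" (s o t) is the matrix t *m s. *)
From HB Require Import structures.
From mathcomp Require Import all_boot all_order all_algebra.
Set Implicit Arguments. Unset Strict Implicit. Unset Printing Implicit Defensive.
Import Order.TTheory GRing.Theory Num.Theory.
Local Open Scope ring_scope.

Section Reduction.
Variables (K : fieldType) (n : nat).

Definition bvec (y : 'I_n) : 'rV[K]_n := delta_mx 0 y.

Definition lm (v : 'rV[K]_n) : option 'I_n :=
  [pick i | (v 0 i != 0) && [forall j, (v 0 j != 0) ==> (j <= i)%N]].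

Definition vlt (v w : 'rV[K]_n) : bool :=
  (v == 0) ||
  (match lm v, lm w with Some a, Some b => (a < b)%N | _, _ => false end).

Definition reduction_op (T : 'M[K]_n) : Prop :=
  T *m T = T /\ forall y : 'I_n, bvec y *m T = bvec y \/ vlt (bvec y *m T) (bvec y).

Definition is_join (T1 T2 T : 'M[K]_n) : Prop :=
  reduction_op T /\ (kermx T == kermx T1 :&: kermx T2)%MS.

(* <t,s>^m = ... s t s  (m factors, rightmost s applied first) *)
Fixpoint alt (t s : 'M[K]_n) (m : nat) : 'M[K]_n :=
  match m with
  | 0 => 1%:M
  | m'.+1 => s *m alt s t m'
  end.

(* phi^P(gamma_1) = (1 - T2) o sum_{i in I} <T2,T1>^i,
   phi^P(gamma_2) = (1 - T1) o sum_{i in I} <T1,T2>^i,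
   I = odd integers in [1, k-1]. *)
Definition phi_gamma1 (T1 T2 : 'M[K]_n) (k : nat) : 'M[K]_n :=
  (\sum_(1 <= i < k | odd i) alt T2 T1 i) *m (1%:M - T2).
Definition phi_gamma2 (T1 T2 : 'M[K]_n) (k : nat) : 'M[K]_n :=
  (\sum_(1 <= i < k | odd i) alt T1 T2 i) *m (1%:M - T1).

End Reduction.

(* Main.v *)
Require Import Defs.
From HB Require Import structures.
From mathcomp Require Import all_boot all_order all_algebra.
Import GRing.Theory.
Local Open Scope ring_scope.

Set Implicit Arguments. Unset Strict Implicit.
Section Aux.
Variables (K : fieldType) (n : nat).
Implicit Types (T J : 'M[K]_n) (x d v : 'rV[K]_n).

Definition Rd T (j : 'I_n) := bvec K j *m T == bvec K j.

Lemma bvecM T (j y : 'I_n) : (bvec K j *m T) 0 y = T j y.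
Proof. by rewrite /bvec -rowE mxE. Qed.

Lemma mxBE (A B : 'rV[K]_n) (y : 'I_n) : (A - B) 0 y = A 0 y - B 0 y.
Proof. by rewrite !mxE. Qed.

Lemma lm_bound x a : lm x = Some a -> forall j, x 0 j != 0 -> (j <= a)%N.
Proof.
rewrite /lm; case: pickP => // i /andP[_ /forallP H] [<-] j Hj.
exact: (implyP (H j) Hj).
Qed.

Lemma lm_nz x a : lm x = Some a -> x 0 a != 0.
Proof. by rewrite /lm; case: pickP => // i /andP[H _] [<-]. Qed.

Lemma redF T (j y : 'I_n) : reduction_op T -> ~~ Rd T j -> (j <= y)%N -> T j y = 0.
Proof.
move=> [_ hT] nR jy; case: (hT j) => [E|]; first by rewrite /Rd E eqxx in nR.
rewrite /vlt; case/orP=> [/eqP E|]; first by rewrite -bvecM E mxE.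
case Ea: (lm _) => [a|] //; case Eb: (lm _) => [b|] // ab.
have bj: b = j.
  have := lm_nz Eb; rewrite /bvec mxE /=.
  by case: (b =P j) => // _; rewrite /= mulr0n eqxx.
apply/eqP; apply: contraT => Hne.
have ya : (y <= a)%N by apply: (lm_bound Ea); rewrite bvecM.
move: ab; rewrite bj => aj.
have : (y < j)%N by apply: leq_ltn_trans ya aj.
by rewrite ltnNge jy.
Qed.

Lemma redG T (j y : 'I_n) : Rd T j -> T j y = (j == y)%:R.
Proof. by rewrite /Rd => /eqP E; rewrite -bvecM E /bvec mxE eq_sym. Qed.

Lemma redT0 T (j y : 'I_n) : reduction_op T -> (j <= y)%N -> j != y -> T j y = 0.
Proof.
move=> hT jy ne; case R: (Rd T j); first by rewrite (redG _ R) (negbTE ne).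
by apply: redF => //; rewrite R.
Qed.

Lemma exmax (P : pred 'I_n) y0 : P y0 ->
  exists y, P y /\ forall j, P j -> (j <= y)%N.
Proof.
move=> Py0; case: (arg_maxnP (fun i : 'I_n => nat_of_ord i) Py0) => y Py H.
by exists y.
Qed.

Lemma L1 T d (y : 'I_n) : reduction_op T -> d *m T = 0 -> d 0 y != 0 ->
  (forall j : 'I_n, (y < j)%N -> d 0 j = 0) -> ~~ Rd T y.
Proof.
move=> hT dT dy hj; apply/negP => R.
have : (d *m T) 0 y = d 0 y.
  rewrite mxE (bigD1 y) //= (redG _ R) eqxx mulr1 big1 ?addr0 // => j ne.
  case: (ltngtP j y) => [jy|yj|/val_inj E]; last by rewrite E eqxx in ne.
  - by rewrite (redT0 hT (ltnW jy)) ?mulr0.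
  - by rewrite hj ?mul0r.
by rewrite dT mxE => E; rewrite -E eqxx in dy.
Qed.

Lemma S2 T J (y : 'I_n) : reduction_op T -> reduction_op J ->
  (forall d, d *m J = 0 -> d *m T = 0) -> Rd T y -> Rd J y.
Proof.
move=> hT hJ hK R; apply: contraT => nR.
set d := bvec K y - bvec K y *m J.
have dJ : d *m J = 0 by rewrite /d mulmxBl -mulmxA hJ.1 subrr.
have := L1 (d:=d) (y:=y) hT (hK _ dJ).
rewrite R => H; apply: H.
  rewrite /d mxBE bvecM (redF hJ nR (leqnn _)) subr0 /bvec mxE !eqxx.
  by rewrite oner_eq0.
move=> j yj; rewrite /d mxBE bvecM (redF hJ nR (ltnW yj)) subr0 /bvec mxE.
have /negbTE -> : j != y by apply/eqP => E; rewrite E ltnn in yj.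
by rewrite andbF.
Qed.

Lemma S1 T x (y : 'I_n) : reduction_op T -> x *m T = x -> ~~ Rd T y -> x 0 y = 0.
Proof.
move=> hT xT nR; apply/eqP; apply: contraT => xy.
have [z [/andP[nRz xz] Hz]] := exmax (P := fun z => ~~ Rd T z && (x 0 z != 0)) (y0:=y) (introT andP (conj nR xy)).
move: xz; rewrite -xT mxE big1 ?eqxx // => j _.
case R: (Rd T j).
  rewrite (redG _ R); case: eqP => [E|]; last by rewrite mulr0.
  by rewrite -E R in nRz.
case: (leqP j z) => jz; first by rewrite (redF hT _ jz) ?mulr0 ?R.
case: (x 0 j =P 0) => [->|/eqP nz]; first by rewrite mul0r.
have := Hz j; rewrite R nz /= => /(_ isT) zj.
by rewrite leqNgt jz in zj.
Qed.

Lemma im_sub T J x : reduction_op T -> reduction_op J ->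
  (forall d, d *m J = 0 -> d *m T = 0) -> x *m T = x -> x *m J = x.
Proof.
move=> hT hJ hK xT.
set d := x - x *m J.
have dJ : d *m J = 0 by rewrite /d mulmxBl -mulmxA hJ.1 subrr.
suff : d = 0 by move/eqP; rewrite subr_eq0 => /eqP.
apply/rowP => y; rewrite [RHS]mxE; apply/eqP; apply: contraT => dy.
have [z [dz Hz]] := exmax (P := fun z => d 0 z != 0) dy.
have nRJ : ~~ Rd J z.
  apply: (L1 hJ dJ dz) => j zj; apply/eqP; apply: contraT => nj.
  by have := Hz j nj; rewrite leqNgt zj.
have nRT : ~~ Rd T z by apply: contra nRJ; apply: S2.
move: dz; rewrite /d !mxE (S1 hT xT nRT) sub0r big1 ?oppr0 ?eqxx // => j _.
case R: (Rd T j); last by rewrite (S1 hT xT) ?mul0r ?R.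
rewrite (redG _ (S2 hT hJ hK R)); case: eqP => [E|]; last by rewrite mulr0.
by rewrite -E R in nRT.
Qed.

End Aux.
Lemma alt_recr (K : fieldType) (n : nat) (t s : 'M[K]_n) m :
  alt t s m.+1 = alt t s m *m (if odd m then t else s).
Proof.
elim: m t s => [|m IH] t s; first by rewrite /= mulmx1 mul1mx.
change (alt t s m.+2) with (s *m alt s t m.+1).
rewrite IH mulmxA /=; by case: (odd m).
Qed.

Lemma tele (V : zmodType) (f : nat -> V) k :
  \sum_(1 <= i < k | odd i) (f i - f i.+2) = f 1%N - f (if odd k then k else k.+1).
Proof.
elim: k => [|k IH]; first by rewrite big_geq // subrr.
case: k IH => [|k] IH; first by rewrite big_geq // subrr.
rewrite big_mkcond big_nat_recr //= -big_mkcond IH.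
rewrite /=; case: (odd k) => /=; first by rewrite addr0.
by rewrite addrA subrK.
Qed.

Lemma main (K : fieldType) (n : nat) (T1 T2 J : 'M[K]_n) k :
  reduction_op T1 -> reduction_op T2 -> reduction_op J ->
  (kermx J == kermx T1 :&: kermx T2)%MS -> (0 < k)%N ->
  alt T1 T2 k = alt T2 T1 k ->
  forall v : 'rV[K]_n, v *m T1 = 0 -> v *m phi_gamma2 T1 T2 k = v *m J.
Proof.
move=> h1 h2 hJ /eqmxP hK k0 hc v v1.
have kJ : forall d : 'rV[K]_n, d *m J = 0 <-> d *m T1 = 0 /\ d *m T2 = 0.
  move=> d; split.
    by move/sub_kermxP; rewrite hK sub_capmx => /andP[/sub_kermxP ? /sub_kermxP ?].
  by case=> /sub_kermxP a /sub_kermxP b; apply/sub_kermxP; rewrite hK sub_capmx a b.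
set f := fun i => v *m alt T1 T2 i.
have fodd : forall i, odd i -> f i *m T2 = f i.
  case=> [|i] //= oi; by rewrite /f alt_recr (negbTE oi) /= -mulmxA -mulmxA h2.1.
have fS : forall i, odd i -> f i *m T1 *m T2 = f i.+2.
  by move=> i oi; rewrite /f !alt_recr /= oi /= !mulmxA.
have fk : forall j, f (k + j)%N = 0.
  elim=> [|j IH].
    rewrite addn0 /f hc; case: k k0 {hc} => // k _ /=.
    by rewrite mulmxA v1 mul0mx.
  by rewrite addnS /f alt_recr mulmxA -/(f _) IH mul0mx.
set u := v *m phi_gamma2 T1 T2 k.
have uE : u = \sum_(1 <= i < k | odd i) (f i - f i *m T1).
  rewrite /u /phi_gamma2 mulmxA mulmx_sumr mulmx_suml.
  by apply: eq_bigr => i _; rewrite mulmxBr mulmx1.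
have u1 : u *m T1 = 0.
  by rewrite /u /phi_gamma2 -!mulmxA mulmxBl mul1mx h1.1 subrr !mulmx0.
have u2 : u *m T2 = v *m T2.
  rewrite uE mulmx_suml (eq_bigr (fun i => f i - f i.+2)); last first.
    by move=> i oi; rewrite mulmxBl fodd // fS.
  rewrite tele.
  have -> : f (if odd k then k else k.+1) = 0.
    case: (odd k); [have := fk 0%N; rewrite addn0 | have := fk 1%N; rewrite addn1] => //.
  by rewrite subr0 /f /= mulmx1.
have : (v - u) *m J = 0.
  by apply/(kJ (v - u)); rewrite !mulmxBl v1 u1 u2 !subrr.
rewrite mulmxBl => /eqP; rewrite subr_eq0 => /eqP ->.
have kT1 : forall d : 'rV[K]_n, d *m J = 0 -> d *m T1 = 0 by by move=> d /(kJ d) [].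
have kT2 : forall d : 'rV[K]_n, d *m J = 0 -> d *m T2 = 0 by by move=> d /(kJ d) [].
rewrite uE mulmx_suml; apply: eq_bigr => i oi.
rewrite mulmxBl (im_sub h2 hJ kT2 (fodd i oi)).
by rewrite (im_sub h1 hJ kT1) // -mulmxA h1.1.
Qed.

Theorem lemma3p2p8 (K : fieldType) (n : nat) (T1 T2 : 'M[K]_n) (k : nat)
  (hT1 : reduction_op T1) (hT2 : reduction_op T2)
  (hk : (0 < k)%N) (hconf : alt T1 T2 k = alt T2 T1 k)
  (J : 'M[K]_n) (hJ : is_join T1 T2 J)
  (m : nat) (W : 'M[K]_(m, n)) :
  ((W <= kermx T1)%MS ->
     forall v : 'rV[K]_n, (v <= W)%MS -> v *m phi_gamma2 T1 T2 k = v *m J) /\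
  ((W <= kermx T2)%MS ->
     forall v : 'rV[K]_n, (v <= W)%MS -> v *m phi_gamma1 T1 T2 k = v *m J).
Proof.
case: hJ => hJ hK; split => hW v vW.
  apply: main => //; apply/sub_kermxP; exact: submx_trans vW hW.
rewrite /phi_gamma1 -/(phi_gamma2 T2 T1 k).
apply: main => //; last by apply/sub_kermxP; exact: submx_trans vW hW.
by rewrite capmxC.
Qed.
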